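(* Let $f,h$ be probability densities on $\mathbb{R}$ with finite second moments and the same first moment. Then for every $N\ge1$, \[ d_{GTW,N}(f^{\otimes N},h^{\otimes N})=d_{GTW,1}(f,h). \]
   Context: With $\hat f(\xi)=\int f(v)e^{-iv\cdot\xi}dv$, the Gabetta–Toscani–Wennberg distance on probability measures on $\mathbb{R}^k$ is $d_{GTW,k}(f,h)=\sup_{\xi\in\mathbb{R}^k\setminus\{0\}}|\hat f(\xi)-\hat h(\xi)|/|\xi|^2$. *)

(* Defs.v *)
From HB Require Import structures.
From mathcomp Require Import all_boot all_order all_algebra.
From mathcomp Require Import all_classical all_reals all_analysis.
Set Implicit Arguments. Unset Strict Implicit. Unset Printing Implicit Defensive.
Import Order.TTheory GRing.Theory Num.Theory.
Import numFieldNormedType.Exports.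
Local Open Scope classical_set_scope.
Local Open Scope ring_scope.

Section GTW.
Variable R : realType.
Local Notation mu := (@lebesgue_measure R).

Definition is_density (f : R -> R) : Prop :=
  measurable_fun setT f /\ (forall x, 0 <= f x) /\
  (\int[mu]_x (f x)%:E = 1)%E.

Definition finite_second_moment (f : R -> R) : Prop :=
  mu.-integrable setT (fun x => (x ^+ 2 * f x)%:E).

Definition first_moment (f : R -> R) : R := Rintegral mu setT (fun x => x * f x).

(** Points of R^k are represented by sequences of length k; a function on
    R^k is a function [seq R -> R] (only its values on sequences of length k
    matter).  Lebesgue integration over R^k is written as the iterated
    Lebesgue integral over the coordinates (Fubini). *)
Fixpoint int_Rn (k : nat) : (seq R -> R) -> R :=
  match k with
  | 0 => fun F => F [::]
  | k'.+1 => fun F => Rintegral mu setT (fun x => int_Rn k' (fun s => F (x :: s)))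
  end.

Definition dotR (u v : seq R) : R := \sum_(p <- zip u v) p.1 * p.2.

Definition sqnorm (v : seq R) : R := \sum_(x <- v) x ^+ 2.

(** Real and imaginary parts of \hat F (xi) = \int F(v) e^{-i v.xi} dv. *)
Definition fourier_re (k : nat) (F : seq R -> R) (xi : seq R) : R :=
  int_Rn k (fun v => F v * cos (dotR v xi)).
Definition fourier_im (k : nat) (F : seq R -> R) (xi : seq R) : R :=
  - int_Rn k (fun v => F v * sin (dotR v xi)).

Definition fourier_dist (k : nat) (F H : seq R -> R) (xi : seq R) : R :=
  Num.sqrt ((fourier_re k F xi - fourier_re k H xi) ^+ 2
          + (fourier_im k F xi - fourier_im k H xi) ^+ 2).

Definition dGTW (k : nat) (F H : seq R -> R) : \bar R :=
  ereal_sup [set (fourier_dist k F H xi / sqnorm xi)%:E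
            | xi in [set xi : seq R | size xi = k /\ has (fun x => x != 0) xi]].

Definition fourier1_re (f : R -> R) (xi : R) : R :=
  Rintegral mu setT (fun v => f v * cos (v * xi)).
Definition fourier1_im (f : R -> R) (xi : R) : R :=
  - Rintegral mu setT (fun v => f v * sin (v * xi)).
Definition dGTW1 (f h : R -> R) : \bar R :=
  ereal_sup [set (Num.sqrt ((fourier1_re f xi - fourier1_re h xi) ^+ 2
                      + (fourier1_im f xi - fourier1_im h xi) ^+ 2) / xi ^+ 2)%:E
            | xi in [set xi : R | xi != 0]].

Definition tensor_pow (f : R -> R) (v : seq R) : R := \prod_(x <- v) f x.

End GTW.

(* Main.v *)
Require Import Defs.
From HB Require Import structures.
From mathcomp Require Import all_boot all_order all_algebra.
From mathcomp Require Import all_classical all_reals all_analysis.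
From mathcomp Require Import complex ring lra measurable_realfun.
Set Implicit Arguments. Unset Strict Implicit.
Import Order.TTheory GRing.Theory Num.Theory.
Import numFieldNormedType.Exports.
Local Open Scope classical_set_scope.
Local Open Scope ring_scope.
Section A.
Variable R : realType.
Local Notation nc := (@Normc.normc R).
Lemma test (a b c d : R) : complex.Re ((a +i* b)%C * (c +i* d)%C) = a * c - b * d /\ complex.Im ((a +i* b)%C * (c +i* d)%C) = a * d + b * c
 /\ (a +i* b)%C - (c +i* d)%C = ((a - c) +i* (b - d))%C /\ nc (a +i* b)%C = Num.sqrt (a^+2 + b^+2)
 /\ complex.Re (1 : R[i]) = 1 /\ complex.Im (1 : R[i]) = 0.
Proof. do !split => //. Qed.
Lemma nc_ge0 (z : R[i]) : 0 <= nc z. Proof. by case: z => a b /=; exact: sqrtr_ge0. Qed.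
Lemma prod_bound (I : Type) (p q : I -> R[i]) (s : seq I) :
  (forall i, nc (p i) <= 1) -> (forall i, nc (q i) <= 1) ->
  nc (\prod_(i <- s) p i - \prod_(i <- s) q i) <= \sum_(i <- s) nc (p i - q i).
Proof.
move=> hp hq; have hQ : forall s, nc (\prod_(i <- s) q i) <= 1.
  elim=> [|j s' IH]; first by rewrite big_nil Normc.normc1.
  by rewrite big_cons Normc.normcM mulr_ile1 ?nc_ge0.
elim: s => [|j s IH]; first by rewrite !big_nil subrr Normc.normc0.
rewrite !big_cons.
have -> : p j * \prod_(i <- s) p i - q j * \prod_(i <- s) q i =
  p j * (\prod_(i <- s) p i - \prod_(i <- s) q i) + (p j - q j) * \prod_(i <- s) q i by ring.
apply: le_trans (le_normcD _ _) _.
rewrite !Normc.normcM addrC lerD //.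
  by rewrite -[X in _ <= X]mulr1 ler_wpM2l ?nc_ge0 ?hQ.
apply: (le_trans _ IH); rewrite -[X in _ <= X]mul1r ler_wpM2r ?nc_ge0 ?hp //.
Qed.
End A.

Section B.
Variable R : realType.
Local Notation mu := (@lebesgue_measure R).
Variable f : R -> R.
Hypothesis Hd : is_density f.

Lemma f_int : mu.-integrable setT (EFin \o f).
Proof.
case: Hd => mf [f0 i1]; apply/integrableP; split.
  exact/measurable_EFinP.
under eq_integral do rewrite /= ger0_norm ?f0 //.
by rewrite i1 ltry.
Qed.

Lemma bnd_int (g : R -> R) : measurable_fun setT g -> (forall x, `|g x| <= 1) ->
  mu.-integrable setT (EFin \o (fun x => f x * g x)).
Proof.
move=> mg gb.
have := integrableMl measurableT f_int mg.
have bg : [bounded g x | x in setT].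
  exists 1; split; first by rewrite realE ler01.
  by move=> M M1 x _ /=; apply: le_trans (gb x) (ltW M1).
move=> /(_ bg).
by apply: eq_integrable => // x _ /=.
Qed.

Lemma cos_int t : mu.-integrable setT (EFin \o (fun x => f x * cos (x * t))).
Proof.
apply: bnd_int; last by move=> x; exact: cos_max.
apply: continuous_measurable_fun => x.
apply: continuous_comp; last exact: continuous_cos.
by apply: cvgMl; exact: cvg_id.
Qed.

Lemma sin_int t : mu.-integrable setT (EFin \o (fun x => f x * sin (x * t))).
Proof.
apply: bnd_int; last by move=> x; exact: sin_max.
apply: continuous_measurable_fun => x.
apply: continuous_comp; last exact: continuous_sin.
by apply: cvgMl; exact: cvg_id.
Qed.


Lemma intZ (k : R) (g : R -> R) : mu.-integrable setT (EFin \o g) ->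
  mu.-integrable setT (EFin \o (fun x => k * g x)).
Proof.
move=> ig; have := integrableZl measurableT k ig.
by apply: eq_integrable => // x _ /=.
Qed.

Definition fs (t : R) : R := Rintegral mu setT (fun v => f v * sin (v * t)).
Definition phi (t : R) : R[i] := (fourier1_re f t +i* fs t)%C.
Definition Pf (xi : seq R) : R[i] := \prod_(t <- xi) phi t.

Lemma main_int (xi : seq R) : forall a th,
  int_Rn (size xi) (fun v => a * tensor_pow f v * cos (dotR v xi + th)) =
  a * (cos th * complex.Re (Pf xi) - sin th * complex.Im (Pf xi)).
Proof.
elim: xi => [|t xi IH] a th.
  by rewrite /= /tensor_pow /dotR /Pf !big_nil /= add0r; ring.
rewrite /=.
have E : forall x, int_Rn (size xi) (fun s => a * tensor_pow f (x :: s) * cos (dotR (x :: s) (t :: xi) + th))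
   = (a * f x) * (cos (x * t + th) * complex.Re (Pf xi) - sin (x * t + th) * complex.Im (Pf xi)).
  move=> x; rewrite -IH; congr (int_Rn _ _); apply: funext => s.
  rewrite /tensor_pow /dotR /= !big_cons /=; congr (_ * cos _); ring.
under eq_Rintegral do rewrite E.
set A := complex.Re (Pf xi); set B := complex.Im (Pf xi).
have E2 : forall x, a * f x * (cos (x * t + th) * A - sin (x * t + th) * B) =
  (a * (cos th * A - sin th * B)) * (f x * cos (x * t)) +
  (a * (- sin th * A - cos th * B)) * (f x * sin (x * t)).
  by move=> x; rewrite cosD sinD; ring.
under eq_Rintegral do rewrite E2.
rewrite RintegralD //; last 2 first.
- by apply: intZ; exact: cos_int.
- by apply: intZ; exact: sin_int.
rewrite RintegralZl //; last exact: cos_int.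
rewrite RintegralZl //; last exact: sin_int.
rewrite /Pf big_cons -/(Pf xi) -/A -/B.
rewrite /A /B /phi; clear E E2 A B; case: (Pf xi) => A B /=.
rewrite /fourier1_re /fs; ring.
Qed.

Lemma f_one : Rintegral mu setT f = 1.
Proof. by case: Hd => _ [_ i1]; rewrite /Rintegral i1. Qed.

Lemma sq_bound (c s u v : R) : u ^+ 2 + v ^+ 2 = 1 ->
  c * u + s * v <= Num.sqrt (c ^+ 2 + s ^+ 2).
Proof.
move=> uv.
case/orP: (le_total (c * u + s * v) 0) => [le0|ge0]; first exact: le_trans le0 (sqrtr_ge0 _).
rewrite -(@ger0_norm _ (c * u + s * v)) // -sqrtr_sqr ler_sqrt; last first.
  by rewrite addr_ge0 // sqr_ge0.
have h : 0 <= (c * v - s * u) ^+ 2 by exact: sqr_ge0.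
have -> : c ^+ 2 + s ^+ 2 = (c ^+ 2 + s ^+ 2) * (u ^+ 2 + v ^+ 2) by rewrite uv mulr1.
rewrite -subr_ge0.
have -> : (c ^+ 2 + s ^+ 2) * (u ^+ 2 + v ^+ 2) - (c * u + s * v) ^+ 2 = (c * v - s * u) ^+ 2 by ring.
exact: h.
Qed.

Lemma phi_le1 t : Normc.normc (phi t) <= 1.
Proof.
rewrite /phi /=.
set c := fourier1_re f t; set s := fs t.
set r := Num.sqrt (c ^+ 2 + s ^+ 2).
have r0 : 0 <= r by exact: sqrtr_ge0.
have rr : r ^+ 2 <= r.
  rewrite sqr_sqrtr; last by rewrite addr_ge0 // sqr_ge0.
  have -> : c ^+ 2 + s ^+ 2 = c * c + s * s by rewrite !expr2.
  rewrite {2}/c {2}/s /fourier1_re /fs.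
  rewrite -(RintegralZl c measurableT (cos_int t)) -(RintegralZl s measurableT (sin_int t)).
  rewrite -(RintegralD measurableT (intZ c (cos_int t)) (intZ s (sin_int t))).
  rewrite -[X in _ <= X]mulr1 -f_one -(RintegralZl r measurableT f_int).
  apply: le_Rintegral => //.
  - exact: (integrableD measurableT (intZ c (cos_int t)) (intZ s (sin_int t))).
  - exact: intZ f_int.
  move=> x _.
  case: Hd => _ [f0 _].
  have -> : c * (f x * cos (x * t)) + s * (f x * sin (x * t)) =
    f x * (c * cos (x * t) + s * sin (x * t)) by ring.
  rewrite [r * _]mulrC ler_wpM2l //.
  exact: sq_bound (cos2Dsin2 _).
have [r1|r1] := leP r 1; first by [].
exfalso; move: rr; rewrite expr2 => rr.
have : r * 1 < r * r by rewrite ltr_pM2l // (lt_trans ltr01 r1).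
by rewrite mulr1 ltNge rr.
Qed.

Lemma phi0 : phi 0 = 1.
Proof.
rewrite /phi /fs /fourier1_re.
under eq_Rintegral do rewrite mulr0 cos0 mulr1.
under [X in (_ +i* X)%C]eq_Rintegral do rewrite mulr0 sin0 mulr0.
by rewrite f_one Rintegral_cst // mul0r.
Qed.

Lemma fre (xi : seq R) : fourier_re (size xi) (tensor_pow f) xi = complex.Re (Pf xi).
Proof.
rewrite /fourier_re.
have := main_int xi 1 0; rewrite cos0 sin0 mul0r subr0 !mul1r => <-.
by congr (int_Rn _ _); apply: funext => v; rewrite addr0 mul1r.
Qed.

Lemma fim (xi : seq R) : fourier_im (size xi) (tensor_pow f) xi = - complex.Im (Pf xi).
Proof.
rewrite /fourier_im.
have := main_int xi 1 (- (pi / 2)).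
rewrite cosN sinN cos_pihalf sin_pihalf mul0r sub0r mul1r mulN1r opprK => <-.
by congr (- int_Rn _ _); apply: funext => v; rewrite mul1r cosBpihalf.
Qed.
End B.

Section C.
Variable R : realType.
Local Notation nc := (@Normc.normc R).

Lemma sqnorm_gt0 (xi : seq R) : has (fun x => x != 0) xi -> 0 < sqnorm xi.
Proof.
rewrite /sqnorm; elim: xi => [//|x xi IH] /= /orP [x0|hx]; rewrite big_cons.
  apply: (@lt_le_trans _ _ (x ^+ 2)); first by rewrite lt_def sqrf_eq0 x0 sqr_ge0.
  by rewrite lerDl sumr_ge0 // => i _; exact: sqr_ge0.
apply: (lt_le_trans (IH hx)); by rewrite lerDr sqr_ge0.
Qed.

Lemma prod_nseq1 (f : R -> R) (Hd : is_density f) n : Pf f (nseq n 0) = 1.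
Proof.
by elim: n => [|n IH]; rewrite /Pf ?big_nil // /= big_cons phi0 // -/(Pf f _) IH mulr1.
Qed.

Lemma dist1 (f h : R -> R) t :
  Num.sqrt ((fourier1_re f t - fourier1_re h t) ^+ 2
          + (fourier1_im f t - fourier1_im h t) ^+ 2) = nc (phi f t - phi h t).
Proof.
rewrite /phi /= /fourier1_im -/(fs f t) -/(fs h t); congr Num.sqrt; ring.
Qed.

Lemma distN (f h : R -> R) (Hf : is_density f) (Hh : is_density h) xi :
  fourier_dist (size xi) (tensor_pow f) (tensor_pow h) xi = nc (Pf f xi - Pf h xi).
Proof.
rewrite /fourier_dist !fre // !fim //.
case: (Pf f xi) => a b; case: (Pf h xi) => c d /=; congr Num.sqrt; ring.
Qed.
End C.

Unset Implicit Arguments.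
Theorem lemma7 (R : realType) (f h : R -> R) (N : nat) :
  is_density f -> is_density h ->
  finite_second_moment f -> finite_second_moment h ->
  first_moment f = first_moment h ->
  (1 <= N)%N ->
  dGTW N (tensor_pow f) (tensor_pow h) = dGTW1 f h.
Proof.
move=> Hf Hh _ _ _ N1.
pose g t := Normc.normc (phi f t - phi h t).
have g0 : g 0 = 0 by rewrite /g !phi0 // subrr Normc.normc0.
have ub1 : forall t, t != 0 -> ((g t / t ^+ 2)%:E <= dGTW1 f h)%E.
  move=> t t0; apply: ereal_sup_ubound; exists t => //.
  by rewrite dist1.
apply/eqP; rewrite eq_le; apply/andP; split.
  apply: ub_ereal_sup => y [xi [sz hs] <-].
  case E: (dGTW1 f h) => [r| |]; last 2 first.
  - exact: leey.
  - by have := ub1 1 (oner_neq0 _); rewrite E.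
  have gt : forall t, g t <= r * t ^+ 2.
    move=> t; have [->|t0] := eqVneq t 0; first by rewrite g0 expr0n /= mulr0.
    have := ub1 t t0; rewrite E lee_fin ler_pdivrMr //.
    by rewrite lt_def sqrf_eq0 t0 sqr_ge0.
  rewrite lee_fin -sz distN // ler_pdivrMr ?sqnorm_gt0 //.
  apply: (le_trans (prod_bound _ (phi_le1 Hf) (phi_le1 Hh))) _.
  rewrite /sqnorm big_distrr /=; apply: ler_sum => t _; exact: gt.
apply: le_ereal_sup => y [t t0 <-].
exists (t :: nseq N.-1 0).
  split; first by rewrite /= size_nseq prednK.
  by rewrite /= t0.
have sz : size (t :: nseq N.-1 0) = N by rewrite /= size_nseq prednK.
rewrite -[X in fourier_dist X _ _ _]sz distN //.
rewrite /Pf !big_cons -!/(Pf _ _) !prod_nseq1 // !mulr1 dist1.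
congr ((_ / _)%:E).
rewrite /sqnorm big_cons big1_seq ?addr0 // => x /andP [_].
by move/nseqP => [-> _]; rewrite expr0n.
Qed.
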